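(* Let $(S,M,T)$ be a triangulated bordered unpunctured surface of genus $0$ and let $\Lambda_1,\Lambda_2$ be surface algebras of type $(S,M,T)$ given by admissible cuts $\chi_1,\chi_2$. Then $\tilde\Lambda_1$ and $\tilde\Lambda_2$ are graded equivalent via the identity if and only if $(\chi_1,\chi_2)$ is equi-distributed.
   Context: $S$ is a connected oriented Riemann surface with boundary and no punctures, $M\subset\partial S$ a finite set of marked points with at least one on each boundary component (if $S$ is a disc, $|M|\ge5$). A triangulation $T$ is a maximal set of pairwise non-crossing arcs (isotopy classes of simple curves between marked points, interior avoiding $M$ and $\partial S$, not cutting out a monogon or digon); it cuts $S$ into triangles; a triangle is internal if none of its sides is a boundary segment. The quiver $Q_T$ has a vertex $i$ per arc $\tau_i$ and an arrow $i\to j$ for each triangle in which $\tau_i,\tau_j$ are sides with $\tau_j$ following $\tau_i$ counterclockwise. $\Lambda_T=kQ_T/I_T$ with $I_T$ generated by the length-two subpaths of the oriented 3-cycles coming from internal triangles. An admissible cut $\chi$ selects one vertex (marked point) $v$ in each internal triangle; the two sides at $v$ determine an arrow of that 3-cycle (the local cut); $\chi$ is identified with this set of arrows, and the surface algebra is $\Lambda=kQ_T/\langle I_T\cup\chi\rangle$. $\tilde\Lambda_i$ denotes $\Lambda_T$ graded by the weight $w_i(\alpha)=1$ if $\alpha\in\chi_i$, $w_i(\alpha)=0$ otherwise. $\tilde\Lambda_1,\tilde\Lambda_2$ are graded equivalent via the identity if there is a function $r\colon (Q_T)_0\to\mathbb{Z}$ with $w_2(\alpha)=w_1(\alpha)+r(s(\alpha))-r(t(\alpha))$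 for every arrow $\alpha$ of $Q_T$ (i.e. a graded equivalence induced by the identity on $Q_T$). $(\chi_1,\chi_2)$ is equi-distributed if for every boundary component $B$ of $S$ the number of local cuts of $\chi_1$ whose selected marked point lies on $B$ equals the corresponding number for $\chi_2$. *)

(* Defs.v *)
(* Combinatorial model of a triangulated bordered
   unpunctured oriented surface (S,M,T): a collection of triangles whose
   sides (listed counterclockwise) are either arcs of T (each glued to
   exactly one other triangle side, orientably) or boundary segments. *)
From HB Require Import structures.
From mathcomp Require Import all_boot all_order all_algebra.
Set Implicit Arguments.
Unset Strict Implicit.
Unset Printing Implicit Defensive.

(* For a triangle t, its corners 0,1,2 and sides 0,1,2 are
   listed counterclockwise: side i goes from corner i to corner i+1
   (mod 3); so corner k is where side k-1 ends and side k starts.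
   vtx t k is the marked point at corner k. *)
Record tsurf := TSurf {
  Pt  : finType;
  Arc : finType;
  Seg : finType;
  Tri : finType;
  side : Tri -> 'I_3 -> (Arc + Seg)%type;
  vtx  : Tri -> 'I_3 -> Pt
}.

Section Surf.
Variable S : tsurf.

Definition is_arc (e : (Arc S + Seg S)%type) : bool :=
  if e is inl _ then true else false.
Definition is_seg (e : (Arc S + Seg S)%type) : bool := ~~ is_arc e.

Definition dside (d : Tri S * 'I_3) := side d.1 d.2.
Definition dvtx (d : Tri S * 'I_3) := vtx d.1 d.2.

Definition glued (d d' : Tri S * 'I_3) : bool :=
  [&& d != d', dside d == dside d' & is_arc (dside d)].

(* corner adjacency around a marked point: the side starting at corner c
   is glued (orientably) to the side ending at corner c' *)
Definition cadj (c c' : Tri S * 'I_3) : bool :=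
  glued c (c'.1, ord_pred c'.2).
Definition crel : rel (Tri S * 'I_3) := [rel c c' | cadj c c' || cadj c' c].

Definition trel : rel (Tri S) :=
  [rel t t' | [exists i : 'I_3, exists j : 'I_3, glued (t, i) (t', j)]].

Definition brel : rel (Pt S) :=
  [rel p q | [exists d : Tri S * 'I_3,
     [&& is_seg (dside d), dvtx d == p & vtx d.1 (ordS d.2) == q]]].
Definition bsym : rel (Pt S) := [rel p q | brel p q || brel q p].

Definition same_bdry (p q : Pt S) : bool := connect bsym p q.

Definition nbdry : nat := n_comp bsym (@predT (Pt S)).

Definition internal (t : Tri S) : bool := [forall i : 'I_3, is_arc (side t i)].

(* Well-formedness: the gluing describes a connected, oriented, unpunctured
   bordered surface of genus 0, with its triangulation; disc => |M| >= 5. *)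
Definition genus0_triangulated : Prop :=
     (forall a : Arc S, #|[set d : Tri S * 'I_3 | dside d == inl a]| = 2) /\
      (forall s : Seg S, #|[set d : Tri S * 'I_3 | dside d == inr s]| = 1) /\
      (* marked points = classes of corners glued around a vertex *)
      (forall c c', (dvtx c == dvtx c') = connect crel c c') /\
      (forall p : Pt S, exists c, dvtx c = p) /\
      (* no punctures: every marked point has a corner on the boundary *)
      (forall p : Pt S, exists c, dvtx c = p /\
          (is_seg (dside c) \/ is_seg (side c.1 (ord_pred c.2)))) /\
      0 < #|Tri S| /\ (forall t t' : Tri S, connect trel t t') /\
      (* genus 0: V - E + F = 2 - 2g - b with g = 0 *)
      #|Pt S| + #|Tri S| + nbdry = 2 + #|Arc S| + #|Seg S| /\
      (nbdry = 1 -> 5 <= #|Pt S|).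

(* An admissible cut: for each internal triangle t, the chosen corner chi t
   (values on non-internal triangles are irrelevant).  The arrows of Q_T
   are the pairs (t,k) whose two sides at corner k are arcs; the arrow goes
   from the arc of side k-1 to the arc of side k. *)
Definition cut := Tri S -> 'I_3.

Definition weight (chi : cut) (t : Tri S) (k : 'I_3) : int :=
  (internal t && (k == chi t))%:Z.

Definition graded_equiv_id (chi1 chi2 : cut) : Prop :=
  exists r : Arc S -> int, forall (t : Tri S) (k : 'I_3) (a b : Arc S),
    side t (ord_pred k) = inl a -> side t k = inl b ->
    weight chi2 t k = (weight chi1 t k + r a - r b)%R.

Definition ncuts_on (chi : cut) (p : Pt S) : nat :=
  #|[set t : Tri S | internal t && same_bdry (vtx t (chi t)) p]|.

Definition equidistributed (chi1 chi2 : cut) : Prop :=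
  forall p : Pt S, ncuts_on chi1 p = ncuts_on chi2 p.

End Surf.

(* Main.v *)
Require Import Defs.
From mathcomp Require Import all_boot all_order all_algebra.
From mathcomp Require Import ring zify.
Set Implicit Arguments.
Unset Strict Implicit.
Unset Printing Implicit Defensive.
Import GRing.Theory Num.Theory.

Section Proof.
Variable S : tsurf.
Hypothesis HS : genus0_triangulated S.

Local Notation C := (Tri S * 'I_3)%type.
Local Notation E := (Arc S + Seg S)%type.

Definition dend (d : C) := vtx d.1 (ordS d.2).
Definition dinside (c : C) := side c.1 (ord_pred c.2).

Lemma Harc : forall a : Arc S, #|[set d : C | dside d == inl a]| = 2.
Proof. by case: HS. Qed.
Lemma Hseg : forall s : Seg S, #|[set d : C | dside d == inr s]| = 1.
Proof. by case: HS => _ []. Qed.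
Lemma Hvtx : forall c c' : C, (dvtx c == dvtx c') = connect (@crel S) c c'.
Proof. by case: HS => _ [] _ []. Qed.
Lemma Hpt : forall p : Pt S, exists c : C, dvtx c = p.
Proof. by case: HS => _ [] _ [] _ []. Qed.
Lemma Hnp : forall p : Pt S, exists c : C, dvtx c = p /\
          (is_seg (dside c) \/ is_seg (side c.1 (ord_pred c.2))).
Proof. by case: HS => _ [] _ [] _ [] _ []. Qed.
Lemma Hpos : 0 < #|Tri S|.
Proof. by case: HS => _ [] _ [] _ [] _ [] _ []. Qed.
Lemma Hconn : forall t t' : Tri S, connect (@trel S) t t'.
Proof. by case: HS => _ [] _ [] _ [] _ [] _ [] _ []. Qed.
Lemma Heuler : #|Pt S| + #|Tri S| + nbdry S = 2 + #|Arc S| + #|Seg S|.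
Proof. by case: HS => _ [] _ [] _ [] _ [] _ [] _ [] _ []. Qed.

Lemma glued_sym (d d' : C) : glued d d' = glued d' d.
Proof.
by apply/idP/idP => /and3P [n /eqP e a]; apply/and3P; split;
  rewrite 1?eq_sym ?e // -e.
Qed.

Lemma glued_orient (d d' : C) : glued d d' -> dvtx d = dend d'.
Proof.
move=> g; apply/eqP; rewrite -[dend d']/(dvtx (d'.1, ordS d'.2)) Hvtx; apply: connect1.
by rewrite /crel /= /cadj /= ordSK -surjective_pairing g.
Qed.

Lemma glued_side (d d' : C) : glued d d' -> dside d = dside d'.
Proof. by case/and3P=> _ /eqP. Qed.

Lemma glued_arc (d d' : C) : glued d d' -> is_arc (dside d).
Proof. by case/and3P. Qed.

Lemma arc_partner (d : C) : is_arc (dside d) -> exists d', glued d d'.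
Proof.
case E1: (dside d) => [a|s] // _.
have /cards2P [x [y [xy Hxy]]] : #|[set d0 : C | dside d0 == inl a]| == 2 by rewrite Harc.
have : x \in [set d0 : C | dside d0 == inl a] by rewrite Hxy !inE eqxx.
rewrite inE => /eqP ex.
have : y \in [set d0 : C | dside d0 == inl a] by rewrite Hxy !inE eqxx orbT.
rewrite inE => /eqP ey.
have : d \in [set d0 : C | dside d0 == inl a] by rewrite inE E1.
rewrite Hxy !inE => /orP [] /eqP Hd; subst d.
- by exists y; rewrite /glued xy ex ey eqxx.
- by exists x; rewrite /glued eq_sym xy ex ey eqxx.
Qed.

Lemma glued_uniq (d d1 d2 : C) : glued d d1 -> glued d d2 -> d1 = d2.
Proof.
move=> /and3P [n1 /eqP s1 a1] /and3P [n2 /eqP s2 _].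
case E1: (dside d) a1 s1 s2 => [a|s] // _ s1 s2.
have /cards2P [x [y [xy Hxy]]] : #|[set d0 : C | dside d0 == inl a]| == 2 by rewrite Harc.
have mem z : dside z = inl a -> z = x \/ z = y.
  move=> ez; have : z \in [set d0 : C | dside d0 == inl a] by rewrite inE ez.
  by rewrite Hxy !inE => /orP [] /eqP; [left|right].
case: (mem d E1) => Hd; case: (mem d1 (esym s1)) => H1;
  case: (mem d2 (esym s2)) => H2; subst; rewrite ?eqxx in n1 n2 => //.
Qed.

Definition partner (d : C) : C := if [pick d' : C | @glued S d d'] is Some d' then d' else d.

Lemma partner_glued (d : C) : is_arc (dside d) -> glued d (partner d).
Proof.
move=> /arc_partner [d' g]; rewrite /partner; case: pickP => [x -> //|].
by move=> /(_ d'); rewrite g.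
Qed.

Lemma partner_seg (d : C) : ~~ is_arc (dside d) -> partner d = d.
Proof.
move=> na; rewrite /partner; case: pickP => [x g|//].
by rewrite (glued_arc g) in na.
Qed.

Lemma partnerK : involutive partner.
Proof.
move=> d; case: (boolP (is_arc (dside d))) => [a|na]; last by rewrite !partner_seg.
have g := partner_glued a.
have a' : is_arc (dside (partner d)) by rewrite -(glued_side g).
have g' := partner_glued a'.
rewrite glued_sym in g.
by rewrite (glued_uniq g' g).
Qed.

Lemma partner_inj : injective partner.
Proof. exact: inv_inj partnerK. Qed.

Lemma dside_partner (d : C) : dside (partner d) = dside d.
Proof.
case: (boolP (is_arc (dside d))) => [a|na]; last by rewrite partner_seg.
by rewrite -(glued_side (partner_glued a)).
Qed.

Lemma dend_partner (d : C) : is_arc (dside d) -> dend (partner d) = dvtx d.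
Proof. by move=> a; rewrite (glued_orient (partner_glued a)). Qed.

Lemma bsym_sym : symmetric (@bsym S).
Proof. by move=> p q; rewrite /bsym /= orbC. Qed.

Lemma seg_bsym (d : C) : is_seg (dside d) -> bsym (dvtx d) (dend d).
Proof.
move=> sg; apply/orP; left; apply/existsP; exists d.
by rewrite sg !eqxx.
Qed.


Lemma hS_inj : injective (fun c : C => (c.1, ordS c.2)).
Proof. move=> [t k] [t' k'] H; congr (_, _); [exact: (congr1 fst H)|apply: ordS_inj; exact: (congr1 snd H)]. Qed.

Lemma tri_sum (R : zmodType) (r : E -> R) (t : Tri S) :
  (\sum_(k < 3) (r (side t (ord_pred k)) - r (side t k)) = 0)%R.
Proof.
rewrite sumrB (reindex_inj (@ordS_inj 3)) /=.
by rewrite (eq_bigr (fun k => r (side t k))) ?subrr // => k _; rewrite ordSK.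
Qed.

Lemma comp_sum (R : zmodType) (r : E -> R) (G : pred (Pt S)) :
  (forall p q, bsym p q -> G p = G q) ->
  (\sum_(c : C | G (dvtx c)) (r (dinside c) - r (dside c)) = 0)%R.
Proof.
move=> HG; rewrite sumrB (reindex_inj hS_inj) /=.
rewrite (eq_bigr (fun c => r (dside c))); last first.
  by move=> [t k] _; rewrite /dinside /= ordSK.
rewrite (reindex_inj partner_inj) /=.
rewrite (eq_big (fun c => G (dvtx c)) (fun c => r (dside c))) ?subrr //.
- move=> c; case: (boolP (is_arc (dside c))) => [a|na].
    by rewrite -[dvtx (_, _)]/(dend (partner c)) dend_partner.
  rewrite partner_seg // -[dvtx (_, _)]/(dend c); symmetry; apply: HG.
  exact: seg_bsym.
- by move=> c _; rewrite dside_partner.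
Qed.

Lemma sum_tri (R : nzRingType) (F : C -> R) (t : Tri S) :
  (\sum_(c : C) F c * (c.1 == t)%:R = \sum_(k < 3) F (t, k))%R.
Proof.
transitivity (\sum_(t' : Tri S) \sum_(k < 3) F (t', k) * (t' == t)%:R)%R.
  by rewrite pair_bigA; apply: congr_big => // -[].
rewrite (bigD1 t) //= [X in (_ + X)%R]big1 ?addr0.
  by apply: eq_bigr => k _; rewrite eqxx mulr1.
by move=> t' /negbTE nt; apply: big1 => k _; rewrite nt mulr0.
Qed.

Lemma tri_prop (Q : pred (Tri S)) (t0 : Tri S) :
  Q t0 -> (forall t t', trel t t' -> Q t -> Q t') -> forall t, Q t.
Proof.
move=> Q0 Hstep t; have /connectP [p Hp ->] := Hconn t0 t.
elim: p t0 Q0 Hp => //= t1 p IH t0 Q0 /andP [e1 Hp].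
exact: IH (Hstep _ _ e1 Q0) Hp.
Qed.

Lemma fan (p : Pt S) : exists c : C, (dvtx c == p) && is_seg (dside c).
Proof.
case: (boolP [exists c : C, (dvtx c == p) && is_seg (dside c)]) => [/existsP //|].
rewrite negb_exists => /forallP H.
have Ha c : dvtx c == p -> is_arc (dside c).
  by move=> e; move: (H c); rewrite e /= /is_seg negbK.
pose A := [set c : C | dvtx c == p].
pose succ c := (fun c : C => ((partner c).1, ordS (partner c).2)) c.
have succ_inj : injective succ.
  by move=> x y /hS_inj /partner_inj.
have succA : [set succ c | c in A] \subset A.
  apply/subsetP => _ /imsetP [c cA ->]; rewrite inE in cA; rewrite inE.
  rewrite -[dvtx _]/(dend (partner c)) dend_partner //; exact: Ha.
have [c0 [e0 h0]] := Hnp p.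
case: h0 => h0.
  by move: (Ha c0 (introT eqP e0)); move: h0; rewrite /is_seg => /negbTE ->.
have c0A : c0 \in A by rewrite inE e0.
have nc0 : c0 \notin [set succ c | c in A].
  apply/imsetP => -[c cA ec].
  have ed : partner c = (c0.1, ord_pred c0.2).
    by apply: hS_inj; rewrite /= ord_predK -surjective_pairing ec.
  have : partner (partner c) = (c0.1, ord_pred c0.2).
    by rewrite ed partner_seg.
  rewrite partnerK => ec'.
  rewrite inE in cA.
  by move: (Ha c cA); rewrite ec' /dside /=; move: h0; rewrite /is_seg => /negbTE ->.
have : #|A| <= #|A :\ c0|.
  rewrite -(card_imset A succ_inj); apply: subset_leq_card.
  apply/subsetP => x xs; rewrite in_setD1 (subsetP succA x xs) andbT.
  by apply: contraNneq nc0 => <-.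
by rewrite (cardsD1 c0 A) c0A ltnn.
Qed.

Lemma sum_dside (e : E) :
  (\sum_(i in {: C} | dside i == e) 1 = #|[set d : C | dside d == e]|)%N.
Proof. by rewrite -sum1_card; apply: eq_bigl => i; rewrite !inE. Qed.

Lemma cardC : #|{: C}| = (2 * #|Arc S| + #|Seg S|)%N.
Proof.
rewrite -sum1_card (partition_big (@dside S) xpredT) //= big_sumType /=.
rewrite (eq_bigr (fun _ => 2%N)); last by move=> a _; rewrite sum_dside Harc.
rewrite [X in (_ + X)%N](eq_bigr (fun _ => 1%N)); last by move=> s _; rewrite sum_dside Hseg.
by rewrite !sum_nat_const muln1 mulnC; congr (_ * _ + _); apply: eq_card.
Qed.

Lemma cardSegD : #|[set d : C | is_seg (dside d)]| = #|Seg S|.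
Proof.
rewrite -sum1_card (partition_big (@dside S) (@is_seg S)) //=; last by move=> i; rewrite inE.
rewrite big_sumType /= big_pred0 // add0n.
rewrite (eq_bigr (fun _ => 1%N)); first by rewrite sum_nat_const muln1.
move=> s _; transitivity #|[set d : C | dside d == inr s]|; last exact: Hseg s.
rewrite -sum1_card; apply: eq_bigl => i; rewrite !inE.
by case: (dside i).
Qed.

Lemma V_le_Seg : #|Pt S| <= #|Seg S|.
Proof.
pose f p := xchoose (fan p).
have finj : injective f.
  move=> p q e; have /andP [/eqP ep _] := xchooseP (fan p).
  have /andP [/eqP eq _] := xchooseP (fan q).
  by rewrite -ep -eq -/(f p) e.
rewrite -cardSegD -(card_imset (mem (Pt S)) finj); apply: subset_leq_card.
apply/subsetP => _ /imsetP [p _ ->]; rewrite inE.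
by have /andP [_ ->] := xchooseP (fan p).
Qed.

Definition Rt := {p : Pt S | roots (@bsym S) p}.

Lemma cardRt : #|{: Rt}| = nbdry S.
Proof. by rewrite card_sig /nbdry /n_comp_mem; apply: eq_card => p; rewrite !inE andbT. Qed.

Lemma I3_cases (i j : 'I_3) : [\/ i = j, i = ordS j | j = ordS i].
Proof.
case: i j => [[|[|[|i]]] Hi] [[|[|[|j]]] Hj] //;
 first [ by constructor 1; apply: val_inj
       | by constructor 2; apply: val_inj
       | by constructor 3; apply: val_inj ].
Qed.

Lemma dart_of (e : E) : exists d : C, dside d = e.
Proof.
case: e => [a|s].
  have : 0 < #|[set d : C | dside d == inl a]| by rewrite Harc.
  by case/card_gt0P => d; rewrite inE => /eqP; exists d.
have : 0 < #|[set d : C | dside d == inr s]| by rewrite Hseg.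
by case/card_gt0P => d; rewrite inE => /eqP; exists d.
Qed.

Local Open Scope ring_scope.

Definition delta (R : zmodType) (r : E -> R) (c : C) := r (dinside c) - r (dside c).

Lemma propagate (r : E -> rat) (G : pred rat) (t0 : Tri S) :
  G 0 -> (forall x y, G x -> G y -> G (x - y)) -> (forall c, G (delta r c)) ->
  forall e, G (r e - r (side t0 0)).
Proof.
move=> G0 GB Hd.
have GN x : G x -> G (- x) by move=> gx; rewrite -sub0r; apply: GB.
have GD x y : G x -> G y -> G (x + y) by move=> gx gy; rewrite -[y]opprK; apply: GB => //; apply: GN.
have Htri t i j : G (r (side t i) - r (side t j)).
  case: (I3_cases i j) => [->|->|->]; first by rewrite subrr.
  - have := Hd (t, ordS j); rewrite /delta /dinside /= ordSK => /GN.
    by rewrite opprB.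
  - by have := Hd (t, ordS i); rewrite /delta /dinside /= ordSK.
pose Q t := G (r (side t 0) - r (side t0 0)).
have HQ : forall t, Q t.
  apply: (@tri_prop Q t0); first by rewrite /Q subrr.
  move=> t t' /existsP [i /existsP [j g]] Qt; rewrite /Q.
  have es : side t i = side t' j := glued_side g.
  have -> : r (side t' 0) - r (side t0 0) =
     (r (side t' 0) - r (side t' j)) + (r (side t i) - r (side t 0)) + (r (side t 0) - r (side t0 0)).
    by rewrite es; ring.
  by apply: (GD); [apply: (GD)|]; [apply: (Htri)|apply: (Htri)|].
move=> e; have [[t i] <-] := dart_of e.
have -> : r (dside (t, i)) - r (side t0 0) =
   (r (side t i) - r (side t 0)) + (r (side t 0) - r (side t0 0)) by rewrite /dside /=; ring.
by apply: (GD); [apply: (Htri)|apply: (HQ)].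
Qed.

Definition mkM (I J : finType) (f : I -> J -> rat) : 'M[rat]_(#|I|, #|J|) :=
  \matrix_(i, j) f (enum_val i) (enum_val j).
Definition mkV (I : finType) (v : I -> rat) : 'rV[rat]_#|I| := \row_i v (enum_val i).

Lemma mkVE (I : finType) (v : I -> rat) (x : I) : mkV v 0 (enum_rank x) = v x.
Proof. by rewrite mxE enum_rankK. Qed.

Lemma mkV_eta (I : finType) (u : 'rV[rat]_#|I|) : u = mkV (fun x => u 0 (enum_rank x)).
Proof. by apply/rowP => i; rewrite mxE enum_valK. Qed.

Lemma mkV_ext (I : finType) (v w : I -> rat) : (forall x, v x = w x) -> mkV v = mkV w.
Proof. by move=> H; apply/rowP => i; rewrite !mxE H. Qed.

Lemma mkV_inj (I : finType) (v w : I -> rat) : mkV v = mkV w -> forall x, v x = w x.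
Proof. by move=> H x; rewrite -!(mkVE _ x) H. Qed.

Lemma mkVM (I J : finType) (v : I -> rat) (f : I -> J -> rat) :
  mkV v *m mkM f = mkV (fun j => \sum_(i : I) v i * f i j).
Proof.
apply/rowP => j; rewrite !mxE.
rewrite (reindex (@enum_rank I)) /=; last exact: onW_bij (@enum_rank_bij I).
by apply: eq_bigr => i _; rewrite !mxE enum_rankK.
Qed.

Lemma trmx_mkM (I J : finType) (f : I -> J -> rat) :
  (mkM f)^T = mkM (fun j i => f i j).
Proof. by apply/matrixP => i j; rewrite !mxE. Qed.

Lemma sum_ind (I : finType) (v : I -> rat) (a : I) :
  \sum_(i : I) v i * (i == a)%:R = v a.
Proof.
rewrite (bigD1 a) //= eqxx mulr1 big1 ?addr0 // => i /negbTE ->.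
by rewrite mulr0.
Qed.

Lemma sum_cond (I : finType) (F : I -> rat) (P : pred I) :
  \sum_(i : I) F i * (P i)%:R = \sum_(i | P i) F i.
Proof.
by rewrite [RHS]big_mkcond; apply: eq_bigr => i _; case: (P i); rewrite ?mulr1 ?mulr0.
Qed.

Definition Dm : 'M[rat]_(#|{: E}|, #|{: C}|) :=
  mkM (fun (e : E) (c : C) => (e == dinside c)%:R - (e == dside c)%:R).

Lemma mkV_D (r : E -> rat) : mkV r *m Dm = mkV (delta r).
Proof.
rewrite mkVM; apply: mkV_ext => c.
under eq_bigr => e _ do rewrite mulrBr.
by rewrite sumrB !sum_ind.
Qed.

Definition Pf (c : C) (j : (Tri S + Rt)%type) : rat :=
  match j with
  | inl t => (c.1 == t)%:R
  | inr rho => (connect (@bsym S) (dvtx c) (val rho))%:R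
  end.
Definition Pm := mkM Pf.

Lemma csym : connect_sym (@bsym S).
Proof. exact: sym_connect_sym bsym_sym. Qed.

Lemma delta_P (r : E -> rat) : mkV (delta r) *m Pm = 0.
Proof.
rewrite /Pm mkVM; apply/rowP => k; rewrite !mxE.
case: (enum_val k) => [t|rho] /=.
  by rewrite sum_tri; apply: tri_sum.
rewrite (sum_cond (delta r) (fun c : C => connect (@bsym S) (dvtx c) (val rho))).
have HG : forall p q, bsym p q -> connect (@bsym S) p (val rho) = connect (@bsym S) q (val rho).
  by move=> p q pq; rewrite (same_connect1 csym pq).
exact: (comp_sum r HG).
Qed.

Lemma Dm_Pm : Dm *m Pm = 0.
Proof.
apply/row_matrixP => i; rewrite row_mul row0.
have -> : row i Dm = mkV (delta (fun e => (e == enum_val i)%:R)).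
  by apply/rowP => c; rewrite !mxE /delta ![_ == enum_val i]eq_sym.
exact: delta_P.
Qed.

Lemma mkV0 (I : finType) : mkV (fun _ : I => 0 : rat) = 0.
Proof. by apply/rowP => i; rewrite !mxE. Qed.

Lemma rank_ker_le1 m n (M : 'M[rat]_(m, n)) (v : 'rV[rat]_m) :
  (forall u : 'rV_m, u *m M = 0 -> (u <= v)%MS) -> (\rank (kermx M) <= 1)%N.
Proof.
move=> H; apply: leq_trans (rank_leq_row v); apply: mxrankS.
by apply/row_subP => i; apply: H; rewrite -row_mul mulmx_ker row0.
Qed.

Lemma kerD (u : 'rV[rat]_#|{: E}|) : u *m Dm = 0 -> (u <= (const_mx 1 : 'rV[rat]_#|{: E}|))%MS.
Proof.
move=> H; rewrite [u]mkV_eta in H *.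
set r := (fun x => u 0 (enum_rank x)) in H *.
rewrite mkV_D -(mkV0 C) in H.
have [t0 _] := card_gt0P Hpos.
have He := @propagate r (fun y => y == 0) t0 (eqxx 0).
have {}He : forall e, r e - r (side t0 0) == 0.
  apply: He; first by move=> x y /eqP -> /eqP ->; rewrite subrr.
  by move=> c; rewrite (mkV_inj H c).
have -> : mkV r = r (side t0 0) *: const_mx 1.
  apply/rowP => i; rewrite !mxE mulr1.
  by apply/eqP; rewrite -subr_eq0 He.
by rewrite scalemx_sub.
Qed.

Definition v0 (j : (Tri S + Rt)%type) : rat := if j is inl _ then 1 else -1.
Definition rho (p : Pt S) : Rt := exist _ (fingraph.root (@bsym S) p) (roots_root csym p).

Lemma sumP (w : (Tri S + Rt)%type -> rat) (c : C) :
  \sum_j w j * Pf c j = w (inl c.1) + w (inr (rho (dvtx c))).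
Proof.
rewrite big_sumType /=; congr (_ + _).
  rewrite (eq_bigr (fun t => w (inl t) * (t == c.1)%:R)) ?sum_ind //.
  by move=> t _; rewrite eq_sym.
rewrite (eq_bigr (fun q => w (inr q) * (q == rho (dvtx c))%:R)) ?sum_ind //.
move=> q _.
have Hr : fingraph.root (@bsym S) (val q) = val q := eqP (valP q).
suff -> : connect (@bsym S) (dvtx c) (val q) = (q == rho (dvtx c)) by [].
apply/idP/eqP => [Hc|->]; last exact: connect_root.
apply: val_inj; rewrite /= -Hr; apply/eqP.
by rewrite eq_sym (root_connect csym).
Qed.

Lemma rho_val (q : Rt) : rho (val q) = q.
Proof. by apply: val_inj; rewrite /= (eqP (valP q)). Qed.

Lemma kerPt (u : 'rV[rat]_#|{: Tri S + Rt}|) : u *m Pm^T = 0 -> (u <= mkV v0)%MS.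
Proof.
move=> H; rewrite [u]mkV_eta in H *.
set w := (fun x => u 0 (enum_rank x)) in H *.
rewrite /Pm trmx_mkM mkVM -(mkV0 C) in H.
have Hc c : w (inl c.1) = - w (inr (rho (dvtx c))).
  by have := mkV_inj H c; rewrite /= sumP => /eqP; rewrite addr_eq0 => /eqP.
have [t0 _] := card_gt0P Hpos.
have Ht : forall t, w (inl t) == w (inl t0).
  apply: (@tri_prop (fun t => w (inl t) == w (inl t0)) t0) => // t t' /existsP [i /existsP [j g]] /eqP Ht.
  rewrite -Ht (Hc (t', ordS j)) (Hc (t, i)).
  by rewrite (glued_orient g).
have -> : mkV w = w (inl t0) *: mkV v0.
  apply/rowP => k; rewrite !mxE; case: (enum_val k) => [t|q] /=.
    by rewrite mulr1 (eqP (Ht t)).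
  have [c Ec] := Hpt (val q).
  have := Hc c; rewrite Ec rho_val (eqP (Ht c.1)) => ->.
  by rewrite mulrN1 opprK.
by rewrite scalemx_sub.
Qed.

Lemma core (x : C -> int) :
  (forall t, \sum_(k < 3) x (t, k) = 0) ->
  (forall p, \sum_(c : C | connect (@bsym S) (dvtx c) p) x c = 0) ->
  exists r : E -> int, forall c, x c = r (dinside c) - r (dside c).
Proof.
move=> Htri Hcomp.
pose xq c : rat := (x c)%:~R.
have Y : mkV xq *m Pm = 0.
  rewrite /Pm mkVM -mkV0; apply: mkV_ext => -[t|q] /=.
    by rewrite sum_tri /xq -rmorph_sum /= Htri.
  rewrite (sum_cond xq (fun c : C => connect (@bsym S) (dvtx c) (val q))).
  by rewrite /xq -rmorph_sum /= Hcomp.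
have sub2 : (Dm <= kermx Pm)%MS by rewrite sub_kermx Dm_Pm.
have rD : (\rank (kermx Dm) <= 1)%N.
  by apply: (rank_ker_le1 (v := (const_mx 1 : 'rV[rat]_#|{: E}|))) => u /kerD.
have rPt : (\rank (kermx Pm^T) <= 1)%N.
  by apply: (rank_ker_le1 (v := mkV v0)) => u /kerPt.
have e1 : \rank (kermx Dm) = (#|{: E}| - \rank Dm)%N := mxrank_ker Dm.
have e2 : \rank (kermx Pm^T) = (#|{: Tri S + Rt}| - \rank Pm)%N.
  by rewrite mxrank_ker mxrank_tr.
have e3 : \rank (kermx Pm) = (#|{: C}| - \rank Pm)%N := mxrank_ker Pm.
have l1 : (\rank Dm <= #|{: E}|)%N := rank_leq_row Dm.
have l2 : (\rank Pm <= #|{: Tri S + Rt}|)%N := rank_leq_col Pm.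
have c1 := cardC.
have c2 : #|{: C}| = (3 * #|Tri S|)%N by rewrite card_prod card_ord mulnC.
have c3 : #|{: E}| = (#|Arc S| + #|Seg S|)%N by rewrite card_sum.
have c4 : #|{: Tri S + Rt}| = (#|Tri S| + nbdry S)%N by rewrite card_sum cardRt.
have c5 := Heuler.
have c6 := V_le_Seg.
have Hle : (\rank (kermx Pm) <= \rank Dm)%N by lia.
have sub3 : (kermx Pm <= Dm)%MS.
  have [_ <-] := mxrank_leqif_sup sub2.
  by rewrite eqn_leq mxrankS.
have : (mkV xq <= Dm)%MS by apply: submx_trans sub3; rewrite sub_kermx Y.
case/submxP => r0 Hr0.
set rq := fun e => r0 0 (enum_rank e).
have Hrq : forall c, xq c = delta rq c.
  by move=> c; apply: mkV_inj c; rewrite -mkV_D -mkV_eta.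
have [t0 _] := card_gt0P Hpos.
have Hint : forall e, rq e - rq (side t0 0) \is a Num.int.
  apply: (@propagate rq (fun y => y \is a Num.int) t0).
  - exact: rpred0.
  - by move=> a b ha hb; apply: rpredB.
  - by move=> c; rewrite -Hrq intr_int.
exists (fun e => Num.floor (rq e - rq (side t0 0))) => c.
apply: (@intr_inj rat); rewrite intrB !floorK ?Hint //.
rewrite -/(xq c) Hrq /delta; ring.
Qed.

Lemma wsum (chi : cut S) (t : Tri S) :
  \sum_(k < 3) weight chi t k = (internal t : nat)%:Z.
Proof.
rewrite (bigD1 (chi t)) //= big1 ?addr0.
  by rewrite /weight eqxx andbT.
by move=> k /negbTE nk; rewrite /weight nk andbF.
Qed.

Lemma ncuts_sum (chi : cut S) (p : Pt S) :
  \sum_(c : C | connect (@bsym S) (dvtx c) p) weight chi c.1 c.2 = (ncuts_on chi p)%:Z.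
Proof.
rewrite big_mkcond /=.
transitivity (\sum_(t : Tri S) \sum_(k < 3)
   (if connect (@bsym S) (vtx t k) p then weight chi t k else 0)).
  by rewrite pair_bigA; apply: congr_big => // -[].
transitivity (\sum_(t : Tri S)
   ((internal t && connect (@bsym S) (vtx t (chi t)) p) : nat)%:Z).
  apply: eq_bigr => t _; rewrite (bigD1 (chi t)) //= big1 ?addr0.
    by rewrite /weight eqxx andbT; case: ifP; rewrite ?andbT ?andbF.
  by move=> k /negbTE nk; rewrite /weight nk andbF; case: ifP.
rewrite /ncuts_on -sum1_card -[RHS]natz natr_sum [RHS]big_mkcond /=.
by apply: eq_bigr => t _; rewrite inE; case: (_ && _).
Qed.

Definition Vt (R : Arc S -> int) (t : Tri S) : int :=
  if [pick i : 'I_3 | is_arc (side t i)] is Some i then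
    (if side t i is inl a then R a else 0) else 0.
Definition rext (R : Arc S -> int) (e : E) : int :=
  match e with
  | inl a => R a
  | inr s => if [pick d : C | dside d == inr s] is Some d then Vt R d.1 else 0
  end.

Lemma rext_nonint (R : Arc S -> int) (t : Tri S) :
  (forall k a b, side t (ord_pred k) = inl a -> side t k = inl b -> R a = R b) ->
  forall i, rext R (side t i) = Vt R t.
Proof.
move=> HR i.
case Ei: (side t i) => [a|s] /=.
- rewrite /Vt; case: pickP => [j aj|]; last by move=> /(_ i); rewrite Ei.
  case Ej: (side t j) aj => [a'|s'] // _.
  case: (I3_cases i j) => e; subst.
  + by move: Ej; rewrite Ei => -[->].
  + by symmetry; apply: (HR (ordS j)) => //; rewrite ordSK.
  + by apply: (HR (ordS i)) => //; rewrite ordSK.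
- case: pickP => [d /eqP Ed|]; last by move=> /(_ (t,i)); rewrite /dside /= Ei eqxx.
  have : #|[set d0 : C | dside d0 == inr s]| == 1 by rewrite Hseg.
  case/cards1P => z Hz.
  have : d \in [set d0 : C | dside d0 == inr s] by rewrite inE Ed.
  have : (t,i) \in [set d0 : C | dside d0 == inr s] by rewrite inE /dside /= Ei.
  by rewrite Hz !inE => /eqP e1 /eqP e2; rewrite e2 -e1.
Qed.

End Proof.

Local Open Scope ring_scope.

Theorem theorem3p12 (S : tsurf) (HS : genus0_triangulated S)
  (chi1 chi2 : cut S) :
  graded_equiv_id chi1 chi2 <-> equidistributed chi1 chi2.
Proof.
split.
- move=> [R HR] p.
  have Hx c : weight chi2 c.1 c.2 - weight chi1 c.1 c.2 =
              rext R (dinside c) - rext R (dside c).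
    case: c => t k /=; rewrite /dinside /dside /=.
    case: (boolP (internal t)) => It.
      have /forallP Iall := It.
      have := Iall (ord_pred k); have := Iall k.
      case Eb: (side t k) => [b|//] _; case Ea: (side t (ord_pred k)) => [a|//] _ /=.
      have := HR t k a b Ea Eb; lia.
    have HRt : forall k' a b, side t (ord_pred k') = inl a -> side t k' = inl b -> R a = R b.
      move=> k' a b Ea Eb; have := HR t k' a b Ea Eb.
      by rewrite /weight (negbTE It) /=; lia.
    by rewrite !(rext_nonint HS HRt) /weight (negbTE It) /= !subrr.
  have HG : forall q q', bsym q q' -> connect (@bsym S) q p = connect (@bsym S) q' p.
    by move=> q q' qq; rewrite (same_connect1 (@csym S) qq).
  have := comp_sum HS (rext R) HG.
  rewrite -(eq_bigr _ (fun c _ => Hx c)) sumrB !ncuts_sum => /eqP.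
  rewrite subr_eq0 => /eqP [] ->.
  by [].
- move=> Heq.
  pose x (c : Tri S * 'I_3) := weight chi2 c.1 c.2 - weight chi1 c.1 c.2.
  have Ht : forall t, \sum_(k < 3) x (t, k) = 0.
    by move=> t; rewrite /x sumrB !wsum subrr.
  have Hp : forall p, \sum_(c : Tri S * 'I_3 | connect (@bsym S) (dvtx c) p) x c = 0.
    by move=> p; rewrite /x sumrB !ncuts_sum Heq subrr.
  have [r Hr] := core HS Ht Hp.
  exists (fun a => r (inl a)) => t k a b Ha Hb.
  have := Hr (t, k); rewrite /x /dinside /dside /= Ha Hb /=; lia.
Qed.
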